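(* For every $n\ge 3$ there does not exist any $\mathrm{SL}_2$-tiling of $\mathbb{Z}^n$.
   Context: Write $\mathbf{e}_k$ for the $k$-th standard unit vector of $\mathbb{Z}^n$. An $\mathrm{SL}_2$-tiling of $\mathbb{Z}^n$ is an array $(a_{\mathbf{i}})_{\mathbf{i}\in\mathbb{Z}^n}$ with all $a_{\mathbf{i}}\in\mathbb{Z}_{>0}$ such that for all $\mathbf{i}\in\mathbb{Z}^n$ and all $k\ne\ell$: $a_{\mathbf{i}+\mathbf{e}_\ell}a_{\mathbf{i}+\mathbf{e}_k}-a_{\mathbf{i}}a_{\mathbf{i}+\mathbf{e}_k+\mathbf{e}_\ell}=1$. *)

(* Defs.v *)
From HB Require Import structures.
From mathcomp Require Import all_boot all_order all_algebra.
Set Implicit Arguments. Unset Strict Implicit. Unset Printing Implicit Defensive.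
Import Order.TTheory GRing.Theory Num.Theory.
Local Open Scope ring_scope.

Definition e_ (n : nat) (k : 'I_n) : 'rV[int]_n := delta_mx 0 k.

Definition SL2_tiling (n : nat) (a : 'rV[int]_n -> int) : Prop :=
  (forall i, 0 < a i) /\
  (forall (i : 'rV[int]_n) (k l : 'I_n), k != l ->
     a (i + e_ l) * a (i + e_ k) - a i * a (i + e_ k + e_ l) = 1).

(* Main.v *)
Require Import Defs.
From HB Require Import structures.
From mathcomp Require Import all_boot all_order all_algebra.
From mathcomp Require Import zify ring.
Import Order.TTheory GRing.Theory Num.Theory.

Local Open Scope ring_scope.

Lemma key (A B1 B2 B3 C12 C13 C23 D : int) :
  0 < A -> 0 < B1 -> 0 < B2 ->
  B2 * B1 - A * C12 = 1 ->
  B3 * B1 - A * C13 = 1 ->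
  B3 * B2 - A * C23 = 1 ->
  C13 * C12 - B1 * D = 1 ->
  C23 * C12 - B2 * D = 1 -> B1 = B2.
Proof.
move=> hA h1 h2 e1 e2 e3 e4 e5.
have E : (B1 - B2) * (B1 * B2 - 1 + A * A) = 0.
  have x1 : B1 * B2 - 1 = A * C12 by lia.
  have x2 : B1 * B3 - 1 = A * C13 by lia.
  have x3 : B2 * B3 - 1 = A * C23 by lia.
  have y1 : A * A * (B1 * D + 1) = (B1 * B2 - 1) * (B1 * B3 - 1).
    rewrite x1 x2; have -> : B1 * D + 1 = C13 * C12 by lia. ring.
  have y2 : A * A * (B2 * D + 1) = (B1 * B2 - 1) * (B2 * B3 - 1).
    rewrite x1 x3; have -> : B2 * D + 1 = C23 * C12 by lia. ring.
  have : B2 * (A * A * (B1 * D + 1)) - B1 * (A * A * (B2 * D + 1)) =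
         B2 * ((B1 * B2 - 1) * (B1 * B3 - 1)) - B1 * ((B1 * B2 - 1) * (B2 * B3 - 1)).
    by rewrite y1 y2.
  move=> h. 
  have -> : (B1 - B2) * (B1 * B2 - 1 + A * A) =
    B2 * ((B1 * B2 - 1) * (B1 * B3 - 1)) - B1 * ((B1 * B2 - 1) * (B2 * B3 - 1))
    - (B2 * (A * A * (B1 * D + 1)) - B1 * (A * A * (B2 * D + 1))) by ring.
  by rewrite h subrr.
have pos : 0 < B1 * B2 - 1 + A * A by nia.
move/eqP: E; rewrite mulf_eq0 => /orP [/eqP|/eqP]; first by lia.
by move=> h; rewrite h in pos; rewrite ltxx in pos.
Qed.

Lemma cube n (a : 'rV[int]_n -> int) : SL2_tiling a ->
  forall i (k l m : 'I_n), k != l -> k != m -> l != m ->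
  a (i + e_ k) = a (i + e_ l).
Proof.
move=> [Hp H] i k l m kl km lm.
have h1 := H i k l kl.
have h2 := H i k m km.
have h3 := H i l m lm.
have h4 := H (i + e_ k) l m lm.
have h5 := H (i + e_ l) k m km.
rewrite [i + e_ l + e_ k]addrAC in h5.
exact: (key _ _ _ _ _ _ _ _ (Hp i) (Hp (i + e_ k)) (Hp (i+e_ l)) h1 h2 h3 h4 h5).
Qed.

Theorem proposition2p4 (n : nat) : (3 <= n)%N ->
  ~ exists a : 'rV[int]_n -> int, SL2_tiling a.
Proof.
move=> hn [a Ha].
have h0 : (0 < n)%N by lia.
have h1 : (1 < n)%N by lia.
have h2 : (2 < n)%N by lia.
pose k := Ordinal h0; pose l := Ordinal h1; pose m := Ordinal h2.
have kl : k != l by []. have km : k != m by []. have lm : l != m by [].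
have step : forall j, exists j', a j' < a j.
  move=> j.
  have := (Ha.2 (j - e_ k) k l kl).
  rewrite -(@cube _ _ Ha (j - e_ k) k l m kl km lm).
  rewrite subrK.
  have p1 := Ha.1 j. have p2 := Ha.1 (j - e_ k). have p3 := Ha.1 (j + e_ l).
  move=> e.
  case: (ltP (a (j - e_ k)) (a j)) => c1; first by exists (j - e_ k).
  case: (ltP (a (j + e_ l)) (a j)) => c2; first by exists (j + e_ l).
  exfalso; nia.
suff : forall N : nat, forall j, a j <= N%:Z -> False.
  move=> S; apply: (S (absz (a 0)) 0); lia.
elim=> [|N IH] j hj.
  have := Ha.1 j; lia.
have [j' hj'] := step j.
apply: (IH j'); lia.
Qed.
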